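(* Let $G=(P,E)$ be a finite, connected, undirected, simple graph on the vertex set $P=\{1,\dots,n\}$ with $n\ge 2$, and let $W$ be a finite totally ordered set of $p$ words. Consider the automata network with confusion parameter $\epsilon=0$ described in the context, started from any initial configuration of the form $(M_u,x_u)=(\{x_u\},x_u)$ with $x_u\in W$ for every $u\in P$, and run under the fully-asynchronous updating scheme. Then the expected number of time steps until the system reaches a fixed point is $\mathcal{O}(n^2p\log n)$. That is, there is an absolute constant $C$ such that for every such $G$, $W$ and initial configuration, this expected number is at most $Cn^2p\log n$.
   Context: Model. Each vertex $u\in P$ (an individual) has a state $(M_u,x_u)$, where the memory $M_u$ is a subset of $W$ and $x_u\in M_u$ is the word $u$ conveys to its neighbours. The neighbourhood of $u$ is $V_u=\{v\in P:(u,v)\in E\}$. The total order on $W$ is written $\prec$, and $\min$ refers to it. Local rule of $u$ for confusion parameter $\epsilon=0$. When $u$ is updated, it first forms $N_u=\{x_v : v\in V_u,\ x_v\notin M_u\}$ and $B_u=\{x_v : v\in V_u,\ x_v\in M_u\}$. If $N_u\neq\emptyset$, the memory becomes $M_u\cup N_u$ and $x_u$ is unchanged (addition). Otherwise the state becomes $(\{\min B_u\},\min B_u)$ (collapse). All other vertices keep their states. Updating schemes. One vertex is updated per time step. Under the sequential scheme, a fixed permutation $\sigma$ of $P$ is chosen and vertices are updated cyclically in the order $\sigma(1),\dots,\sigma(n),\sigma(1),\dots$, with each update using the current states. Under the fully-asynchronous scheme, at each time step one vertex is chosen uniformly at random from $P$, independently of all other steps. A fixed point is a configuration that is left unchanged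 by the local rule of every vertex. *)

(* Defs.v *)
From mathcomp Require Import all_boot.
Set Implicit Arguments. Unset Strict Implicit. Unset Printing Implicit Defensive.

(* Vertices P = 'I_n, words W = 'I_p (any finite total order of size p is
   isomorphic to 'I_p with its natural order). A configuration assigns to
   each vertex u a pair (M_u, x_u). *)
Definition state (p : nat) := ({set 'I_p} * 'I_p)%type.
Definition config (n p : nat) := {ffun 'I_n -> state p}.

Definition simple_graph n (e : rel 'I_n) : Prop :=
  irreflexive e /\ symmetric e.
Definition connected_graph n (e : rel 'I_n) : Prop :=
  forall u v, connect e u v.

Definition wmin p (B : {set 'I_p}) : option 'I_p :=
  [pick w in B | [forall w' in B, (w <= w')%N]].

Definition local_rule n p (e : rel 'I_n) (c : config n p) (u : 'I_n) : state p :=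
  let Mu := (c u).1 in
  let words := [set (c v).2 | v in [set v | e u v]] in
  let Nu := words :\: Mu in
  let Bu := words :&: Mu in
  if Nu != set0 then (Mu :|: Nu, (c u).2)
  else match wmin Bu with
       | Some w => ([set w], w)
       | None => c u   (* unreachable when u has a neighbour *)
       end.

Definition update n p (e : rel 'I_n) (c : config n p) (u : 'I_n) : config n p :=
  [ffun v => if v == u then local_rule e c u else c v].

Definition is_fixed n p (e : rel 'I_n) (c : config n p) : bool :=
  [forall u, update e c u == c].

Definition run n p (e : rel 'I_n) (c : config n p) (s : seq 'I_n) : config n p :=
  foldl (update e) c s.

Definition init_config n p (x0 : 'I_n -> 'I_p) : config n p :=
  [ffun u => ([set x0 u], x0 u)].

(* number of sequences of t uniformly chosen vertices along which no fixed
   point is reached at times 0..t, i.e. n^t * P(T > t) for the hitting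
   time T of the set of fixed points under the fully-asynchronous scheme *)
Definition not_yet_fixed_count n p (e : rel 'I_n) (c : config n p) (t : nat) : nat :=
  #|[set s : t.-tuple 'I_n |
       [forall k : 'I_t.+1, ~~ is_fixed e (run e c (take k s))]]|.

(* Main.v *)
From HB Require Import structures.
Require Import Defs.
From mathcomp Require Import all_boot.
From Stdlib Require Import Reals Lra Lia.
From mathcomp Require Import zify.

Set Warnings "-notation-overridden".
Set Implicit Arguments. Unset Strict Implicit. Unset Printing Implicit Defensive.

Lemma Rplus_assoc' : associative Rplus.
Proof. by move=> a b c; rewrite Rplus_assoc. Qed.
HB.instance Definition _ := Monoid.isComLaw.Build R 0%R Rplus Rplus_assoc' Rplus_comm Rplus_0_l.

Notation "\rsum_ ( i : T ) F" := (\big[Rplus/0%R]_(i : T) F) (at level 41, i at level 50, F at level 41).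

Section RealStuff.
Local Open Scope R_scope.

Lemma rsum_le (T : finType) (F G : T -> R) :
  (forall i, F i <= G i) -> \big[Rplus/0]_(i : T) F i <= \big[Rplus/0]_(i : T) G i.
Proof.
move=> H; apply: (big_ind2 (fun a b => a <= b)); first lra.
  by move=> *; lra.
by move=> i _; apply: H.
Qed.

Lemma rsum_nat (T : finType) (F : T -> nat) :
  INR (\sum_(i : T) F i) = \big[Rplus/0]_(i : T) INR (F i).
Proof.
apply: (big_morph INR); last by [].
by move=> a b; rewrite plus_INR.
Qed.

Lemma rsum_scale (T : finType) (F : T -> R) k :
  \big[Rplus/0]_(i : T) (k * F i) = k * \big[Rplus/0]_(i : T) F i.
Proof.
symmetry; apply: (@big_morph R R (fun x => k * x) 0 Rplus 0 Rplus).
  by move=> a b; lra.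
by lra.
Qed.

Lemma card_sum1 (T : finType) : (\sum_(i : T) 1)%nat = #|T|.
Proof. by rewrite sum1_card. Qed.

Lemma rsum_const (T : finType) (k : R) :
  \big[Rplus/0]_(i : T) k = INR #|T| * k.
Proof.
have -> : \big[Rplus/0]_(i : T) k = \big[Rplus/0]_(i : T) (k * INR 1) by apply: eq_bigr => *; simpl; lra.
by rewrite rsum_scale -rsum_nat card_sum1; lra.
Qed.

Lemma rsum_split (T : finType) (F G : T -> R) :
  \big[Rplus/0]_(i : T) (F i + G i) = \big[Rplus/0]_(i : T) F i + \big[Rplus/0]_(i : T) G i.
Proof. by rewrite big_split. Qed.



Lemma avg_drop (T : finType) (f : T -> R) (G : {set T}) K :
  (0 < #|G|)%nat ->
  (forall u, f u <= K) ->
  (forall u, u \in G -> f u <= K - INR #|T| / INR #|G|) ->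
  \big[Rplus/0]_(u : T) f u <= INR #|T| * K - INR #|T|.
Proof.
move=> G0 H1 H2.
pose g u := K - (if u \in G then INR #|T| / INR #|G| else 0).
apply: Rle_trans (_ : \big[Rplus/0]_(u : T) g u <= _).
  apply: rsum_le => u; rewrite /g; case: ifP => Hu; first by apply: H2.
  by have := H1 u; lra.
have E : forall u, g u = K + (- (INR #|T| / INR #|G|)) * INR (u \in G).
  by move=> u; rewrite /g; case: (u \in G); simpl; lra.
rewrite (eq_bigr _ (fun u _ => E u)) rsum_split rsum_const rsum_scale -rsum_nat.
have -> : (\sum_(i : T) (i \in G : nat))%nat = #|G|.
  by rewrite -sum1_card [RHS]big_mkcond; apply: eq_bigr => i _; case: (i \in G).
have Gp : 0 < INR #|G| by apply: lt_0_INR; apply/ltP.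
have -> : - (INR #|T| / INR #|G|) * INR #|G| = - INR #|T| by field; lra.
lra.
Qed.

Fixpoint Hn (c : nat) : R := match c with 0%nat => 0 | S c' => Hn c' + / INR (S c') end.

Lemma HnS c : Hn c.+1 = Hn c + / INR c.+1.
Proof. by []. Qed.
Lemma Hn0 : Hn 0 = 0.
Proof. by []. Qed.

Lemma inv_pos c : 0 < / INR c.+1.
Proof. by apply: Rinv_0_lt_compat; apply: lt_0_INR; lia. Qed.

Lemma Hn_ge0 c : 0 <= Hn c.
Proof.
elim: c => [|c IH]; first by rewrite Hn0; lra.
rewrite HnS; have := inv_pos c; lra.
Qed.

Lemma Hn_mono a b : (a <= b)%nat -> Hn a <= Hn b.
Proof.
move=> /subnK <-; elim: (b - a)%nat => [|k IH]; first by rewrite add0n; lra.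
rewrite addSn HnS; have := inv_pos (k + a); lra.
Qed.

Lemma Hn_drop a b : (0 < b)%nat -> (a < b)%nat -> Hn a <= Hn b - / INR b.
Proof.
case: b => [//|b] _ Hab; rewrite HnS.
have hh := Hn_mono (a:=a) (b:=b) ltac:(lia). lra.
Qed.

Lemma Hn_ge_inv c : (0 < c)%nat -> / INR c <= Hn c.
Proof.
move=> c0; have hh := Hn_drop (a:=0) c0 c0; rewrite Hn0 in hh; lra.
Qed.

Lemma ln_le' a b : 0 < a -> a <= b -> ln a <= ln b.
Proof.
move=> ha hab; case: (Rle_lt_or_eq_dec _ _ hab) => h.
  by apply: Rlt_le; apply: ln_increasing.
by rewrite h; lra.
Qed.

Lemma ln_step k : (0 < k)%nat -> / INR k.+1 <= ln (INR k.+1) - ln (INR k).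
Proof.
move=> k0.
have kp : 0 < INR k by apply: lt_0_INR; lia.
have k1 : INR k.+1 = INR k + 1 by rewrite S_INR.
have h := exp_ineq1_le (- / INR k.+1).
have e1 : 1 + - / INR k.+1 = INR k / INR k.+1 by rewrite k1; field; lra.
rewrite e1 in h.
have hp : 0 < INR k / INR k.+1 by apply: Rdiv_lt_0_compat; lra.
have hh := ln_le' hp h. rewrite ln_exp in hh.
rewrite /Rdiv ln_mult in hh; [|lra|apply: Rinv_0_lt_compat; lra].
rewrite ln_Rinv in hh; lra.
Qed.

Lemma Hn_ln n : (0 < n)%nat -> Hn n <= 1 + ln (INR n).
Proof.
case: n => [//|n] _; elim: n => [|n IH].
  rewrite HnS Hn0 ln_1 /=; lra.
have hh := ln_step (k:=n.+1) ltac:(lia). rewrite HnS. lra.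
Qed.

End RealStuff.
Lemma card_set_sum (T : finType) (P : pred T) : #|[set x | P x]| = \sum_(x : T) (P x : nat).
Proof.
by rewrite -sum1dep_card big_mkcond; apply: eq_bigr => x _; case: (P x).
Qed.

Lemma sum_tuple_cons (T : finType) t (F : t.+1.-tuple T -> nat) :
  \sum_(s : t.+1.-tuple T) F s = \sum_(u : T) \sum_(s : t.-tuple T) F [tuple of u :: s].
Proof.
rewrite pair_big /=.
pose h (q : T * t.-tuple T) : t.+1.-tuple T := [tuple of q.1 :: q.2].
rewrite (reindex h) /=; first by [].
exists (fun s : t.+1.-tuple T => (thead s, behead_tuple s)).
  by move=> [u s] _; rewrite /h /=; congr pair; apply: val_inj.
move=> s _; rewrite /h /=; apply: val_inj => /=.
by case: s => [[|a l] //= _].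
Qed.

Section Count.
Variables (n p : nat) (e : rel 'I_n).

Lemma count0 (c : config n p) : not_yet_fixed_count e c 0 = ~~ is_fixed e c.
Proof.
rewrite /not_yet_fixed_count card_set_sum.
rewrite (big_pred1 [tuple]); last by move=> s; apply/esym/eqP/val_inj; case: s => [[]].
congr nat_of_bool; apply/forallP/idP => [H|H k].
  by have := H ord0.
by rewrite ord1.
Qed.

Lemma countS (c : config n p) t : not_yet_fixed_count e c t.+1 =
  (~~ is_fixed e c) * \sum_(u < n) not_yet_fixed_count e (update e c u) t.
Proof.
rewrite /not_yet_fixed_count card_set_sum sum_tuple_cons big_distrr /=.
apply: eq_bigr => u _; rewrite card_set_sum big_distrr /=.
apply: eq_bigr => s _.
have -> : [forall k : 'I_t.+2, ~~ is_fixed e (run e c (take k [tuple of u :: s])) ] =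
   (~~ is_fixed e c) && [forall k : 'I_t.+1, ~~ is_fixed e (run e (update e c u) (take k s))].
  apply/forallP/andP => [H|[H1 /forallP H2] k].
    split; first by have := H ord0; rewrite /= ?take0.
    apply/forallP => k; have := H (lift ord0 k).
    by [].
  case: k => [[|k] Hk] /=; first by rewrite ?take0.
  by have := H2 (Ordinal (Hk : k < t.+1)%N).
by case: (~~ is_fixed e c); rewrite ?mul1n ?mul0n.
Qed.

End Count.

Section Drift.
Local Open Scope R_scope.
Variables (n p : nat) (e : rel 'I_n).
Variable Inv : config n p -> Prop.
Variable Phi : config n p -> R.
Hypothesis n_pos : (0 < n)%nat.
Hypothesis Inv_step : forall c u, Inv c -> Inv (update e c u).
Hypothesis Phi_ge0 : forall c, Inv c -> 0 <= Phi c.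
Hypothesis drift : forall c, Inv c -> ~~ is_fixed e c ->
  \big[Rplus/0]_(u : 'I_n) Phi (update e c u) <= INR n * Phi c - INR n.

Lemma sum_f_shift (f : nat -> R) N :
  sum_f_R0 f (S N) = f 0%nat + sum_f_R0 (fun i => f (S i)) N.
Proof.
elim: N => [|N IH] /=; first lra.
rewrite /= in IH; rewrite IH; lra.
Qed.

Lemma sum_f_swap (g : 'I_n -> nat -> R) N :
  sum_f_R0 (fun t => \big[Rplus/0]_(u : 'I_n) g u t) N =
  \big[Rplus/0]_(u : 'I_n) sum_f_R0 (g u) N.
Proof.
elim: N => [|N IH] /=; first by [].
by rewrite IH rsum_split.
Qed.

Lemma count_fixed (c : config n p) t : is_fixed e c -> not_yet_fixed_count e c t = 0%nat.
Proof.
by move=> H; case: t => [|t]; rewrite ?count0 ?countS H.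
Qed.

Lemma drift_bound N : forall c, Inv c ->
  sum_f_R0 (fun t => INR (not_yet_fixed_count e c t) / INR n ^ t) N <= Phi c.
Proof.
have nR : 0 < INR n by apply: lt_0_INR; lia.
elim: N => [|N IH] c Ic.
  rewrite /= count0 /=.
  case Hf: (is_fixed e c) => /=.
    have := Phi_ge0 Ic; lra.
  have H := drift Ic (negbT Hf).
  have H2 : 0 <= \big[Rplus/0]_(u : 'I_n) Phi (update e c u).
    apply: Rle_trans (_ : \big[Rplus/0]_(u : 'I_n) 0 <= _).
      by rewrite rsum_const; lra.
    apply: rsum_le => u; exact: Phi_ge0 (Inv_step u Ic).
  have : INR n <= INR n * Phi c by lra.
  move=> h3.
  have : 1 <= Phi c.
    apply: (Rmult_le_reg_l (INR n)) => //; lra.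
  lra.
case Hf: (is_fixed e c).
  rewrite (sum_eq _ (fun _ => 0)); last by move=> t _; rewrite count_fixed //= /Rdiv Rmult_0_l.
  have := Phi_ge0 Ic.
  have -> : sum_f_R0 (fun _ => 0) N.+1 = 0.
    by elim: N.+1 => [|k IHk] /=; lra.
  done.
rewrite sum_f_shift count0 Hf /=.
have E : forall t, INR (not_yet_fixed_count e c t.+1) / (INR n * INR n ^ t) =
   \big[Rplus/0]_(u : 'I_n) ((/ INR n) * (INR (not_yet_fixed_count e (update e c u) t) / INR n ^ t)).
  move=> t; rewrite countS Hf mul1n rsum_nat.
  have hp : 0 < INR n ^ t by apply: pow_lt.
  rewrite [RHS](eq_bigr (fun u => / (INR n * INR n ^ t) * INR (not_yet_fixed_count e (update e c u) t))); last first.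
    by move=> i _; field; split; lra.
  by rewrite rsum_scale /Rdiv Rmult_comm.
rewrite (sum_eq _ _ _ (fun t _ => E t)).
rewrite sum_f_swap.
have : \big[Rplus/0]_(u : 'I_n) sum_f_R0 (fun t => / INR n * (INR (not_yet_fixed_count e (update e c u) t) / INR n ^ t)) N
   <= \big[Rplus/0]_(u : 'I_n) (/ INR n * Phi (update e c u)).
  apply: rsum_le => u.
  rewrite (sum_eq _ (fun t => (INR (not_yet_fixed_count e (update e c u) t) / INR n ^ t) * / INR n)); last by move=> *; ring.
  rewrite -scal_sum.
  apply: Rmult_le_compat_l; first by apply/Rlt_le/Rinv_0_lt_compat.
  by apply: IH; apply: Inv_step.
rewrite rsum_scale => h.
have H := drift Ic (negbT Hf).
have : / INR n * \big[Rplus/0]_(u : 'I_n) Phi (update e c u) <= / INR n * (INR n * Phi c - INR n).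
  by apply: Rmult_le_compat_l => //; apply/Rlt_le/Rinv_0_lt_compat.
have -> : / INR n * (INR n * Phi c - INR n) = Phi c - 1 by field; lra.
move=> h2; have h3 := Rle_trans _ _ _ h h2; lra.
Qed.

End Drift.
Section Model.
Variables (n p : nat) (e : rel 'I_n).
Hypothesis n2 : (1 < n)%N.
Hypothesis Hsimple : simple_graph e.
Hypothesis Hconn : connected_graph e.

Definition xs (c : config n p) v : 'I_p := (c v).2.
Definition Ms (c : config n p) v : {set 'I_p} := (c v).1.
Definition nbw (c : config n p) u : {set 'I_p} := [set (c w).2 | w in [set w | e u w]].
Definition cur (c : config n p) : {set 'I_p} := [set xs c v | v in [set: 'I_n]].
Definition Inv (c : config n p) : Prop := forall v, xs c v \in Ms c v.

Definition v0 : 'I_n := Ordinal (ltnW n2).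
Definition vmin (c : config n p) : 'I_n := [arg min_(v < v0) (xs c v : nat)].
Definition am (c : config n p) : nat := xs c (vmin c).

Lemma am_le c v : am c <= xs c v.
Proof. by rewrite /am /vmin; case: arg_minnP => // i _ H; apply: H. Qed.

Lemma irr u : e u u = false.
Proof. by case: Hsimple => H _; apply: H. Qed.

Lemma esym u v : e u v = e v u.
Proof. by case: Hsimple => _ H; apply: H. Qed.

Lemma nb_exists u : exists w, e u w.
Proof.
pose v : 'I_n := if u == v0 then Ordinal n2 else v0.
have uv : u != v.
  rewrite /v; case: (eqVneq u v0) => [->|H] //.
have := Hconn u v => /connectP [q Hq Hl].
case: q Hq Hl => [|w q] /=; first by move=> _ E; rewrite -E eqxx in uv.
by move=> /andP [H _] _; exists w.
Qed.

Lemma wmin_spec (B : {set 'I_p}) : B != set0 ->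
  exists m, wmin B = Some m /\ m \in B /\ forall w, w \in B -> m <= w.
Proof.
move=> /set0Pn [i0 Hi0].
rewrite /wmin; case: pickP => [m /andP [Hm /forallP H] | H].
  exists m; split => //; split => // w Hw.
  by have := H w; rewrite Hw.
exfalso.
case: (arg_minnP (fun w : 'I_p => w : nat) Hi0) => m Hm Hmin.
have Hm' : m \in B := Hm.
have := H m; rewrite /= Hm' /= => /negbT /forallPn [w].
by rewrite negb_imply => /andP [Hw]; rewrite Hmin.
Qed.

Lemma local_spec (c : config n p) u :
  (nbw c u :\: Ms c u != set0 /\
     local_rule e c u = (Ms c u :|: (nbw c u :\: Ms c u), xs c u))
  \/ (nbw c u \subset Ms c u /\ exists w, e u w /\
        local_rule e c u = ([set xs c w], xs c w) /\ forall w', e u w' -> xs c w <= xs c w').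
Proof.
rewrite /local_rule -/(nbw c u) -/(Ms c u) -/(xs c u).
case: ifP => HN; first by left.
right.
have Hsub : nbw c u \subset Ms c u by rewrite -setD_eq0; apply/negbFE.
split => //.
have HI : nbw c u :&: Ms c u = nbw c u by apply/setIidPl.
rewrite HI.
have Hne : nbw c u != set0.
  have [w Hw] := nb_exists u.
  by apply/set0Pn; exists (xs c w); apply/imsetP; exists w => //; rewrite inE.
have [m [-> [Hm Hmin]]] := wmin_spec Hne.
case/imsetP: Hm => w; rewrite inE => Hw Em; subst m.
exists w; split => //; split => // w' Hw'.
by apply: Hmin; apply/imsetP; exists w' => //; rewrite inE.
Qed.

Lemma upd_other (c : config n p) u v : v != u -> update e c u v = c v.
Proof. by move=> H; rewrite /update ffunE (negbTE H). Qed.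

Lemma upd_self (c : config n p) u : update e c u u = local_rule e c u.
Proof. by rewrite /update ffunE eqxx. Qed.

Lemma xs_other (c : config n p) u v : v != u -> xs (update e c u) v = xs c v.
Proof. by move=> H; rewrite /xs upd_other. Qed.
Lemma Ms_other (c : config n p) u v : v != u -> Ms (update e c u) v = Ms c v.
Proof. by move=> H; rewrite /Ms upd_other. Qed.

Lemma Inv_step (c : config n p) u : Inv c -> Inv (update e c u).
Proof.
move=> I v; case: (eqVneq v u) => [->|H]; last by rewrite xs_other // Ms_other.
rewrite /xs /Ms upd_self.
case: (local_spec c u) => [[_ ->]|[_ [w [_ [-> _]]]]] /=.
  by rewrite inE I.
by rewrite inE.
Qed.

Lemma xs_cur (c : config n p) v : xs c v \in cur c.
Proof. by apply/imsetP; exists v; rewrite ?inE. Qed.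

Lemma cur_step (c : config n p) u : cur (update e c u) \subset cur c.
Proof.
apply/subsetP => x /imsetP [v _ ->].
case: (eqVneq v u) => [->|H]; last by rewrite xs_other // xs_cur.
rewrite /xs upd_self.
case: (local_spec c u) => [[_ ->]|[_ [w [_ [-> _]]]]] /=; exact: xs_cur.
Qed.

Lemma am_ex (c : config n p) : exists v, (xs c v : nat) = am c.
Proof. by exists (vmin c). Qed.

Lemma am_mono (c : config n p) u : am c <= am (update e c u).
Proof.
have [v Hv] := am_ex (update e c u).
have : xs (update e c u) v \in cur c by apply: (subsetP (cur_step c u)); apply: xs_cur.
by case/imsetP => w _ E; rewrite -Hv E am_le.
Qed.

Lemma am_ext (c c' : config n p) : (forall v, xs c v = xs c' v) -> am c = am c'.
Proof.
move=> H; apply/eqP; rewrite eqn_leq.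
have [v Hv] := am_ex c; have [v' Hv'] := am_ex c'.
by rewrite -{1}Hv' -H am_le -Hv H am_le.
Qed.

Lemma card_cur_le_n (c : config n p) : #|cur c| <= n.
Proof. by rewrite /cur; apply: leq_trans (leq_imset_card _ _) _; rewrite cardsT card_ord. Qed.

Lemma card_le_p (A : {set 'I_p}) : #|A| <= p.
Proof. by apply: leq_trans (max_card _) _; rewrite card_ord. Qed.

Definition rr (c : config n p) v := #|cur c :\: Ms c v|.

Lemma rr_lt (c : config n p) v : Inv c -> rr c v < #|cur c|.
Proof.
move=> I; rewrite /rr; apply: proper_card; apply/properP; split; first by apply: subsetDl.
by exists (xs c v); rewrite ?xs_cur // inE I.
Qed.

Lemma rr_other (c : config n p) u v : v != u -> rr (update e c u) v <= rr c v.
Proof.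
move=> H; rewrite /rr Ms_other //; apply: subset_leq_card; apply: setSD; exact: cur_step.
Qed.

Lemma rr_add (c : config n p) u :
  nbw c u :\: Ms c u != set0 ->
  local_rule e c u = (Ms c u :|: (nbw c u :\: Ms c u), xs c u) ->
  rr (update e c u) u < rr c u.
Proof.
move=> /set0Pn [z Hz] E; rewrite /rr {1}/Ms upd_self E /=.
have Hz' : z \in cur c :\: Ms c u.
  move: (Hz); rewrite !inE => /andP [-> /imsetP [w _ Ew]].
  by rewrite Ew; exact: xs_cur.
apply: (@leq_trans #|(cur c :\: Ms c u) :\ z|.+1).
  rewrite ltnS; apply: subset_leq_card; apply/subsetP => x.
  rewrite !inE => /andP [H1 H2]; move: H1; rewrite negb_or => /andP [H3 H4].
  rewrite H3 (subsetP (cur_step c u) _ H2) /= andbT.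
  apply/eqP => Ex; subst x; have Hz2 := Hz; rewrite inE in Hz2.
  by rewrite Hz2 in H4.
have := cardsD1 z (cur c :\: Ms c u); rewrite Hz' /=; lia.
Qed.


Definition holds (c : config n p) v := (xs c v : nat) == am c.
Definition S2 (c : config n p) := [set v | holds c v && [exists w, e v w && holds c w]].
Definition ph3 (c : config n p) := [forall v, holds c v].
Definition dirty (c : config n p) := [set v | 1 < #|Ms c v|].
Definition adj (c : config n p) v := [exists w, e v w && (w \in S2 c)].
Definition term (c : config n p) v :=
  if v \in S2 c then 0 else if adj c v then (rr c v).+1 else p.+1.
Definition P2 (c : config n p) := \sum_(v < n) term c v.
Definition lvl (c : config n p) l := #|[set v | holds c v && (l <= rr c v)]|.
Definition phi (c : config n p) : R := \big[Rplus/0%R]_(l < n) Hn (lvl c l).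
Definition Bc : R := (INR n * INR n + INR n * (INR n * INR p.+1))%R.
Definition Ec : R := (INR n * (INR n * Hn n))%R.
Definition Phi (c : config n p) : R :=
  if ph3 c then (INR n * INR #|dirty c|)%R
  else if S2 c != set0 then (INR n * INR n + INR n * INR (P2 c))%R
  else (Bc + Ec * INR (#|cur c|).-1 + INR n * phi c)%R.

Lemma holds_eq (c : config n p) v w : holds c v -> holds c w -> xs c v = xs c w.
Proof. by rewrite /holds => /eqP H1 /eqP H2; apply: val_inj; rewrite /= H1 H2. Qed.

Lemma ph3_S2 (c : config n p) : ph3 c -> S2 c != set0.
Proof.
move=> /forallP H; apply/set0Pn; exists v0; rewrite inE H /=.
have [w Hw] := nb_exists v0; apply/existsP; exists w; by rewrite Hw H.
Qed.

Lemma ph3_rule (c : config n p) u : Inv c -> ph3 c ->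
  local_rule e c u = ([set xs c u], xs c u).
Proof.
move=> I /forallP H.
have Hs : nbw c u \subset Ms c u.
  apply/subsetP => x /imsetP [w _ ->].
  by rewrite -/(xs c w) (holds_eq (H w) (H u)).
case: (local_spec c u) => [[HN _]|[_ [w [_ [-> _]]]]].
  by move: HN; rewrite setD_eq0 Hs.
by rewrite (holds_eq (H w) (H u)).
Qed.

Lemma ph3_xs (c : config n p) u v : Inv c -> ph3 c -> xs (update e c u) v = xs c v.
Proof.
move=> I H; case: (eqVneq v u) => [->|Hv]; last by rewrite xs_other.
by rewrite /xs upd_self ph3_rule.
Qed.

Lemma ph3_step (c : config n p) u : Inv c -> ph3 c ->
  ph3 (update e c u) /\ dirty (update e c u) \subset dirty c :\ u.
Proof.
move=> I H; split.
  have Ea : am (update e c u) = am c by apply: am_ext => v; rewrite ph3_xs.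
  apply/forallP => v; rewrite /holds Ea ph3_xs //.
  by move/forallP: H; apply.
apply/subsetP => v; rewrite !inE.
case: (eqVneq v u) => [->|Hv] /=.
  by rewrite /Ms upd_self ph3_rule //= cards1.
by rewrite Ms_other.
Qed.

Lemma set1_of_card (A : {set 'I_p}) x : x \in A -> #|A| <= 1 -> A = [set x].
Proof.
move=> Hx Hc; apply/eqP; rewrite eq_sym eqEcard sub1set Hx cards1 /=; exact: Hc.
Qed.

Lemma ph3_fixed (c : config n p) : Inv c -> ph3 c -> dirty c = set0 -> is_fixed e c.
Proof.
move=> I H Hd; apply/forallP => u; apply/eqP/ffunP => v.
case: (eqVneq v u) => [->|Hv]; last by rewrite upd_other.
rewrite upd_self ph3_rule //.
have : u \notin dirty c by rewrite Hd inE.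
rewrite inE -leqNgt => Hc.
rewrite -(set1_of_card (I u) Hc) /Ms /xs; by case: (c u).
Qed.

Lemma dirty_le (c : config n p) : #|dirty c| <= n.
Proof. by apply: leq_trans (max_card _) _; rewrite card_ord. Qed.

Lemma S2_wit (c : config n p) v w : v \in S2 c -> e v w -> holds c w -> w \in S2 c.
Proof.
rewrite inE => /andP [Hv _] Hvw Hw; rewrite inE Hw /=.
by apply/existsP; exists v; rewrite esym Hvw Hv.
Qed.

Lemma S2_holds (c : config n p) v : v \in S2 c -> holds c v.
Proof. by rewrite inE => /andP []. Qed.

Lemma collapse_am (c : config n p) u w z :
  e u z -> holds c z -> (forall w', e u w' -> xs c w <= xs c w') -> (xs c w : nat) = am c.
Proof.
move=> Hz Hh Hmin; apply/eqP; rewrite eqn_leq am_le andbT.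
by rewrite -(eqP Hh); apply: Hmin.
Qed.

Lemma ph2_keep (c : config n p) u : S2 c != set0 ->
  am (update e c u) = am c /\ S2 c \subset S2 (update e c u).
Proof.
move=> Hne.
have X : forall v, v \in S2 c -> (xs (update e c u) v : nat) = am c.
  move=> v Hv; case: (eqVneq v u) => [Evu|Hvu]; last by rewrite xs_other // (eqP (S2_holds Hv)).
  subst v; rewrite /xs upd_self.
  case: (local_spec c u) => [[_ ->]|[_ [w [_ [-> Hmin]]]]] /=.
    exact: (eqP (S2_holds Hv)).
  move: Hv; rewrite inE => /andP [_ /existsP [z /andP [Hz Hhz]]].
  exact: collapse_am Hz Hhz Hmin.
have Ea : am (update e c u) = am c.
  case/set0Pn: Hne => v Hv.
  apply/eqP; rewrite eqn_leq am_mono andbT -(X v Hv); exact: am_le.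
split => //.
apply/subsetP => v Hv; move: (Hv); rewrite inE => /andP [_ /existsP [z /andP [Hz Hhz]]].
have Hz2 := S2_wit Hv Hz Hhz.
rewrite inE /holds Ea (X v Hv) eqxx /=.
by apply/existsP; exists z; rewrite Hz (X z Hz2) eqxx.
Qed.

Lemma term_step (c : config n p) u v : Inv c -> S2 c != set0 ->
  term (update e c u) v <= term c v /\
  (v = u -> v \notin S2 c -> adj c v -> term (update e c u) v < term c v).
Proof.
move=> I Hne; have [Ea Hsub] := ph2_keep u Hne.
rewrite /term.
case: ifP => Hv'.
  split => // Evu Hv Hadj; by rewrite (negbTE Hv); case: ifP.
have Hv : v \notin S2 c by apply/negP => H; move: Hv'; rewrite (subsetP Hsub _ H).
rewrite (negbTE Hv).
case Hadj: (adj c v).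
  have Hadj' : adj (update e c u) v.
    move/existsP: Hadj => [z /andP [Hz Hz2]]; apply/existsP; exists z.
    by rewrite Hz (subsetP Hsub _ Hz2).
  rewrite Hadj'.
  case: (eqVneq v u) => [Evu|Hvu]; last first.
    by split; [rewrite ltnS rr_other | move=> E; rewrite E eqxx in Hvu].
  subst v.
  case: (local_spec c u) => [[HN HE]|[_ [w [_ [HE Hmin]]]]].
    have := rr_add HN HE; split => //; exact: ltnW.
  exfalso; move/negbT: Hv'; apply/negP/negPn.
  move/existsP: Hadj => [z /andP [Hz Hz2]].
  have Hxs : (xs (update e c u) u : nat) = am c.
    rewrite /xs upd_self HE /=; exact: collapse_am Hz (S2_holds Hz2) Hmin.
  rewrite inE /holds Ea Hxs eqxx /=; apply/existsP; exists z; rewrite Hz /=.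
  by rewrite -Ea; exact: S2_holds (subsetP Hsub _ Hz2).
split; last by [].
by case: ifP => // _; rewrite ltnS /rr; apply: card_le_p.
Qed.

Lemma sum_le_lt (f g : 'I_n -> nat) j :
  (forall i, f i <= g i) -> f j < g j -> \sum_(i < n) f i < \sum_(i < n) g i.
Proof.
move=> H Hj; rewrite (bigD1 j) //= [X in _ < X](bigD1 j) //=.
rewrite -addSn; apply: leq_add => //; apply: leq_sum => i _; apply: H.
Qed.

Lemma P2_step (c : config n p) u : Inv c -> S2 c != set0 ->
  P2 (update e c u) <= P2 c /\
  (u \notin S2 c -> adj c u -> P2 (update e c u) < P2 c).
Proof.
move=> I Hne; split.
  by apply: leq_sum => v _; case: (term_step u v I Hne).
move=> Hu Hadj; apply: (sum_le_lt (j := u)).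
  by move=> v; case: (term_step u v I Hne).
by case: (term_step u u I Hne) => _; apply.
Qed.

Lemma P2_le (c : config n p) : P2 c <= n * p.+1.
Proof.
rewrite /P2; apply: leq_trans (_ : \sum_(v < n) p.+1 <= _).
  apply: leq_sum => v _; rewrite /term; case: ifP => // _; case: ifP => // _.
  by rewrite ltnS /rr card_le_p.
by rewrite sum_nat_const card_ord.
Qed.

Lemma crossing (S : {set 'I_n}) s v : s \in S -> v \notin S ->
  exists a b, [/\ a \in S, b \notin S & e a b].
Proof.
move=> Hs Hv; have := Hconn s v => /connectP [q Hq Hl].
elim: q s Hs Hq Hl => [|z q IH] s Hs /=.
  by move=> _ E; subst v; rewrite Hs in Hv.
move=> /andP [Hsz Hq] Hl.
case Hz: (z \in S); first exact: IH Hz Hq Hl.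
by exists s, z; rewrite Hz Hs Hsz.
Qed.

Lemma holds_vmin (c : config n p) : holds c (vmin c).
Proof. by rewrite /holds /am eqxx. Qed.

Definition vmax (c : config n p) := [arg max_(v > vmin c | holds c v) rr c v].
Definition Rm (c : config n p) := rr c (vmax c).
Definition G1 (c : config n p) := [set v | holds c v && (Rm c <= rr c v)].

Lemma vmax_spec (c : config n p) : holds c (vmax c) /\ forall v, holds c v -> rr c v <= Rm c.
Proof.
rewrite /Rm /vmax; case: arg_maxnP; first exact: holds_vmin.
by move=> i Hi Hmax; split => // v Hv; apply: Hmax.
Qed.

Lemma G1_ne (c : config n p) : 0 < #|G1 c|.
Proof.
have [H _] := vmax_spec c.
by apply/card_gt0P; exists (vmax c); rewrite inE H leqnn.
Qed.

Lemma Rm_lt (c : config n p) : Inv c -> Rm c < n.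
Proof. by move=> I; apply: leq_trans (rr_lt _ I) (card_cur_le_n c). Qed.

Lemma lvl_le (c : config n p) l : lvl c l <= n.
Proof. by apply: leq_trans (max_card _) _; rewrite card_ord. Qed.

Lemma lvl_Rm (c : config n p) : lvl c (Rm c) = #|G1 c|.
Proof. by []. Qed.

Lemma ph1_lvl (c : config n p) u : S2 (update e c u) = set0 ->
  am (update e c u) = am c ->
  forall l v, v \in [set v | holds (update e c u) v && (l <= rr (update e c u) v)] ->
    v \in [set v | holds c v && (l <= rr c v)] /\ (v = u -> rr (update e c u) u < rr c u).
Proof.
move=> HS Ea l v; rewrite !inE => /andP [Hh Hl].
case: (eqVneq v u) => [Evu|Hvu]; last first.
  split; last by move=> E; rewrite E eqxx in Hvu.
  move: Hh; rewrite /holds Ea xs_other // => ->.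
  exact: leq_trans Hl (rr_other _ Hvu).
subst v.
case: (local_spec c u) => [[HN HE]|[_ [w [Hw [HE Hmin]]]]].
  have Hlt := rr_add HN HE.
  split => //.
  move: Hh; rewrite /holds Ea {1}/xs upd_self HE /= => ->.
  exact: leq_trans Hl (ltnW Hlt).
exfalso.
have Hwu : w != u by apply/eqP => E; rewrite E irr in Hw.
have : u \in S2 (update e c u).
  rewrite inE Hh /=; apply/existsP; exists w; rewrite Hw /=.
  move: Hh; rewrite /holds /xs upd_self HE /= => Hh.
  by rewrite -/(xs _ w) xs_other.
by rewrite HS inE.
Qed.

Lemma ph1_W (c : config n p) u : am (update e c u) != am c ->
  0 < #|cur (update e c u)| < #|cur c|.
Proof.
move=> Hne.
have Hlt : am c < am (update e c u) by rewrite ltn_neqAle eq_sym Hne am_mono.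
apply/andP; split.
  by apply/card_gt0P; exists (xs (update e c u) v0); apply: xs_cur.
apply: proper_card; apply/properP; split; first exact: cur_step.
exists (xs c (vmin c)); first exact: xs_cur.
apply/negP => /imsetP [v _ E].
have := am_le (update e c u) v; rewrite -E -/(am c); lia.
Qed.

Lemma INR_le a b : a <= b -> (INR a <= INR b)%R.
Proof. by move/leP; apply: le_INR. Qed.

Lemma INR_lt a b : a < b -> (INR a < INR b)%R.
Proof. by move/ltP; apply: lt_INR. Qed.

Lemma nR : (0 < INR n)%R.
Proof. apply: lt_0_INR; lia. Qed.

Lemma phi_ge0 (c : config n p) : (0 <= phi c)%R.
Proof.
apply: Rle_trans (_ : \big[Rplus/0%R]_(l < n) 0%R <= _)%R.
  by rewrite rsum_const; lra.
by apply: rsum_le => l; apply: Hn_ge0.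
Qed.

Lemma phi_le (c : config n p) : (phi c <= INR n * Hn n)%R.
Proof.
apply: Rle_trans (_ : \big[Rplus/0%R]_(l < n) Hn n <= _)%R.
  by apply: rsum_le => l; apply: Hn_mono; apply: lvl_le.
by rewrite rsum_const card_ord; lra.
Qed.

Lemma phi_big (c : config n p) : Inv c -> (/ INR #|G1 c| <= phi c)%R.
Proof.
move=> I; rewrite /phi (bigD1 (Ordinal (Rm_lt I))) //=.
have h1 := Hn_ge_inv (G1_ne c).
have h2 : (0 <= \big[Rplus/0%R]_(i < n | i != Ordinal (Rm_lt I)) Hn (lvl c i))%R.
  rewrite big_mkcond /=.
  apply: Rle_trans (_ : \big[Rplus/0%R]_(l < n) 0%R <= _)%R.
    by rewrite rsum_const; lra.
  by apply: rsum_le => l; case: ifP => _; [apply: Hn_ge0 | lra].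
rewrite lvl_Rm; have h3 := Rplus_le_compat_l (Hn #|G1 c|) _ _ h2; rewrite Rplus_0_r in h3; exact: Rle_trans h1 h3.
Qed.

Lemma Hn_le_lvl (c c' : config n p) : (forall l, lvl c' l <= lvl c l) -> (phi c' <= phi c)%R.
Proof. by move=> H; apply: rsum_le => l; apply: Hn_mono. Qed.

Lemma phi_drop (c : config n p) u : Inv c ->
  S2 (update e c u) = set0 -> am (update e c u) = am c ->
  (phi (update e c u) <= phi c)%R /\
  (u \in G1 c -> (phi (update e c u) <= phi c - / INR #|G1 c|)%R).
Proof.
move=> I HS Ea.
have Hl : forall l, lvl (update e c u) l <= lvl c l.
  move=> l; apply: subset_leq_card; apply/subsetP => v Hv.
  by case: (ph1_lvl HS Ea Hv).
split; first exact: Hn_le_lvl.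
move=> Hu.
have Hlt : lvl (update e c u) (Rm c) < lvl c (Rm c).
  apply: (@leq_trans #|G1 c :\ u|.+1).
    rewrite ltnS; apply: subset_leq_card; apply/subsetP => v Hv.
    have [H1 H2] := ph1_lvl HS Ea Hv.
    rewrite !inE; rewrite inE in H1; rewrite H1 andbT.
    apply/eqP => E; subst v.
    move: Hv; rewrite inE => /andP [_ H3].
    have := H2 erefl; move: Hu; rewrite inE => /andP [H4 _].
    have := (proj2 (vmax_spec c)) u H4; lia.
  by rewrite lvl_Rm (cardsD1 u (G1 c)) Hu.
rewrite /phi (bigD1 (Ordinal (Rm_lt I))) // [X in (_ <= X - _)%R](bigD1 (Ordinal (Rm_lt I))) //=.
have h1 : (Hn (lvl (update e c u) (Rm c)) <= Hn (lvl c (Rm c)) - / INR (lvl c (Rm c)))%R.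
  by apply: Hn_drop => //; rewrite lvl_Rm; apply: G1_ne.
have h2 : (\big[Rplus/0%R]_(i < n | i != Ordinal (Rm_lt I)) Hn (lvl (update e c u) i) <=
            \big[Rplus/0%R]_(i < n | i != Ordinal (Rm_lt I)) Hn (lvl c i))%R.
  rewrite big_mkcond [X in (_ <= X)%R]big_mkcond /=; apply: rsum_le => i.
  by case: ifP => _; [apply: Hn_mono; apply: Hl | apply: Rle_refl].
rewrite lvl_Rm in h1; rewrite lvl_Rm.
have h3 := Rplus_le_compat _ _ _ _ h1 h2; apply: Rle_trans h3 _.
rewrite /Rminus Rplus_assoc (Rplus_comm (- _) _) -Rplus_assoc; exact: Rle_refl.
Qed.

Lemma Phi_S2 (c : config n p) : S2 c != set0 ->
  (Phi c <= INR n * INR n + INR n * INR (P2 c))%R.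
Proof.
move=> H; rewrite /Phi; case: ifP => _; last by rewrite H; lra.
have h1 := INR_le (dirty_le c); have h2 := pos_INR (P2 c); have h3 := nR.
have h4 : (0 <= INR n * INR (P2 c))%R by apply: Rmult_le_pos; lra.
have h5 : (INR n * INR #|dirty c| <= INR n * INR n)%R by apply: Rmult_le_compat_l; lra.
lra.
Qed.

Lemma Phi_S2_B (c : config n p) : S2 c != set0 -> (Phi c <= Bc)%R.
Proof.
move=> H; apply: Rle_trans (Phi_S2 H) _; rewrite /Bc.
have h := INR_le (P2_le c); rewrite mult_INR in h.
have h5 : (INR n * INR (P2 c) <= INR n * (INR n * INR p.+1))%R by apply: Rmult_le_compat_l; have := nR; lra.
lra.
Qed.

Lemma Phi_ge0 (c : config n p) : (0 <= Phi c)%R.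
Proof.
have h3 := nR.
rewrite /Phi; case: ifP => _.
  by apply: Rmult_le_pos; [lra | apply: pos_INR].
case: ifP => _.
  have := pos_INR (P2 c); have : (0 <= INR n * INR n)%R by apply: Rmult_le_pos; lra.
  move=> h1 h2; have : (0 <= INR n * INR (P2 c))%R by apply: Rmult_le_pos; lra.
  lra.
have hB : (0 <= Bc)%R.
  rewrite /Bc; have := pos_INR p.+1 => h.
  have : (0 <= INR n * INR n)%R by apply: Rmult_le_pos; lra.
  have : (0 <= INR n * (INR n * INR p.+1))%R by repeat apply: Rmult_le_pos; lra.
  lra.
have hE : (0 <= Ec * INR (#|cur c|).-1)%R.
  rewrite /Ec; repeat apply: Rmult_le_pos; try lra; try apply: pos_INR; apply: Hn_ge0.
have hp : (0 <= INR n * phi c)%R by apply: Rmult_le_pos; [lra | apply: phi_ge0].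
lra.
Qed.

Lemma not_ph3_S2 (c : config n p) : ~~ ph3 c -> exists v, v \notin S2 c.
Proof.
move=> /forallPn [v Hv]; exists v; rewrite inE; by rewrite (negbTE Hv).
Qed.

Lemma drift_main (c : config n p) : Inv c -> ~~ is_fixed e c ->
  exists G : {set 'I_n}, [/\ 0 < #|G|,
    forall u, (Phi (update e c u) <= Phi c)%R &
    forall u, u \in G -> (Phi (update e c u) <= Phi c - INR n / INR #|G|)%R].
Proof.
move=> I Hnf.
have hn := nR.
have Hdrop : forall (G : {set 'I_n}) x y, 0 < #|G| -> (x <= y - INR n)%R -> (x <= y - INR n / INR #|G|)%R.
  move=> G x y HG h.
  have hG : (1 <= INR #|G|)%R by have := INR_le HG; rewrite /=.
  have : (INR n / INR #|G| <= INR n)%R.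
    rewrite /Rdiv; have hi : (0 < / INR #|G| <= 1)%R.
      split; first by apply: Rinv_0_lt_compat; lra.
      rewrite -Rinv_1; apply: Rinv_le_contravar; lra.
    have : (INR n * / INR #|G| <= INR n * 1)%R by apply: Rmult_le_compat_l; lra.
    lra.
  lra.
case Hph3: (ph3 c).
  exists (dirty c).
  have Hd : 0 < #|dirty c|.
    rewrite card_gt0; apply/negP => /eqP Hd; move/negP: Hnf; apply.
    exact: ph3_fixed.
  split => //.
    move=> u; have [H1 H2] := ph3_step u I Hph3.
    rewrite /Phi H1 Hph3.
    apply: Rmult_le_compat_l; first lra.
    apply: INR_le; apply: leq_trans (subset_leq_card H2) _.
    by rewrite subset_leq_card // subsetDl.
  move=> u Hu; apply: Hdrop => //.
  have [H1 H2] := ph3_step u I Hph3.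
  rewrite /Phi H1 Hph3.
  have h : (INR #|dirty (update e c u)| + 1 <= INR #|dirty c|)%R.
    rewrite -S_INR; apply: INR_le; apply: leq_trans (_ : #|dirty c :\ u|.+1 <= _).
      by rewrite ltnS subset_leq_card.
    by rewrite (cardsD1 u (dirty c)) Hu.
  have : (INR n * (INR #|dirty (update e c u)| + 1) <= INR n * INR #|dirty c|)%R.
    by apply: Rmult_le_compat_l; lra.
  lra.
case HS: (S2 c != set0).
  exists [set v | (v \notin S2 c) && adj c v].
  have Hne : 0 < #|[set v | (v \notin S2 c) && adj c v]|.
    have [v Hv] := not_ph3_S2 (negbT Hph3).
    case/set0Pn: HS => s Hs.
    have [a [b [Ha Hb Hab]]] := crossing Hs Hv.
    apply/card_gt0P; exists b; rewrite inE Hb /=.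
    by apply/existsP; exists a; rewrite esym Hab Ha.
  have HPhi : Phi c = (INR n * INR n + INR n * INR (P2 c))%R by rewrite /Phi Hph3 HS.
  have HS' : forall u, S2 (update e c u) != set0.
    move=> u; have [_ Hsub] := ph2_keep u HS.
    case/set0Pn: HS => s Hs; apply/set0Pn; exists s; exact: (subsetP Hsub).
  split => //.
    move=> u; apply: Rle_trans (Phi_S2 (HS' u)) _; rewrite HPhi.
    have [H1 _] := P2_step u I HS.
    have := INR_le H1 => h.
    have : (INR n * INR (P2 (update e c u)) <= INR n * INR (P2 c))%R by apply: Rmult_le_compat_l; lra.
    lra.
  move=> u Hu; apply: Hdrop => //.
  apply: Rle_trans (Phi_S2 (HS' u)) _; rewrite HPhi.
  move: Hu; rewrite inE => /andP [Hu1 Hu2].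
  have [_ H2] := P2_step u I HS.
  have := INR_le (H2 Hu1 Hu2); rewrite S_INR => h.
  have : (INR n * (INR (P2 (update e c u)) + 1) <= INR n * INR (P2 c))%R by apply: Rmult_le_compat_l; lra.
  lra.
move/negbT: HS; rewrite negbK => /eqP HS.
exists (G1 c).
have HG := G1_ne c.
have HPhi : Phi c = (Bc + Ec * INR (#|cur c|).-1 + INR n * phi c)%R by rewrite /Phi Hph3 HS eqxx.
have hpb := phi_big I.
have hGpos : (0 < INR #|G1 c|)%R by apply: lt_0_INR; apply/ltP.
have hEc : (0 <= Ec)%R by rewrite /Ec; repeat apply: Rmult_le_pos; try lra; apply: Hn_ge0.
have hnb : (INR n / INR #|G1 c| <= INR n * phi c)%R.
  rewrite /Rdiv; apply: Rmult_le_compat_l; lra.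
have hEW : (0 <= Ec * INR (#|cur c|).-1)%R by apply: Rmult_le_pos => //; apply: pos_INR.
suff : forall u, (Phi (update e c u) <= Phi c - (if u \in G1 c then INR n / INR #|G1 c| else 0))%R.
  move=> H; split => //.
    move=> u; have := H u; case: ifP => _ h; last by lra.
    have : (0 <= INR n / INR #|G1 c|)%R by apply: Rlt_le; apply: Rdiv_lt_0_compat.
    lra.
  by move=> u Hu; have := H u; rewrite Hu.
move=> u.
have hif : (0 <= (if u \in G1 c then INR n / INR #|G1 c| else 0) <= INR n / INR #|G1 c|)%R.
  have : (0 <= INR n / INR #|G1 c|)%R by apply: Rlt_le; apply: Rdiv_lt_0_compat.
  by case: ifP => _; lra.
case HS': (S2 (update e c u) != set0).
  have := Phi_S2_B HS'; rewrite HPhi; lra.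
move/negbT: HS'; rewrite negbK => /eqP HS'.
have Hph3' : ph3 (update e c u) = false.
  by apply/negP => H; have := ph3_S2 H; rewrite HS' eqxx.
have HPhi' : Phi (update e c u) = (Bc + Ec * INR (#|cur (update e c u)|).-1 + INR n * phi (update e c u))%R.
  by rewrite /Phi Hph3' HS' eqxx.
rewrite HPhi' HPhi.
case: (eqVneq (am (update e c u)) (am c)) => Ea.
  have [h1 h2] := phi_drop I HS' Ea.
  have hW : (INR (#|cur (update e c u)|).-1 <= INR (#|cur c|).-1)%R.
    by apply: INR_le; rewrite -!subn1 leq_sub2r // subset_leq_card // cur_step.
  have hEW' : (Ec * INR (#|cur (update e c u)|).-1 <= Ec * INR (#|cur c|).-1)%R by apply: Rmult_le_compat_l.
  case Hu: (u \in G1 c).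
    have h3 := h2 Hu.
    have : (INR n * phi (update e c u) <= INR n * (phi c - / INR #|G1 c|))%R by apply: Rmult_le_compat_l; lra.
    rewrite /Rdiv; lra.
  have : (INR n * phi (update e c u) <= INR n * phi c)%R by apply: Rmult_le_compat_l; lra.
  lra.
have /andP [hW1 hW2] := ph1_W Ea.
have hW : (INR (#|cur (update e c u)|).-1 + 1 <= INR (#|cur c|).-1)%R.
  rewrite -S_INR; apply: INR_le; lia.
have hEW' : (Ec * (INR (#|cur (update e c u)|).-1 + 1) <= Ec * INR (#|cur c|).-1)%R by apply: Rmult_le_compat_l.
have hp' : (INR n * phi (update e c u) <= Ec)%R.
  rewrite /Ec; apply: Rmult_le_compat_l; [lra | apply: phi_le].
have hnb2 : (INR n / INR #|G1 c| <= INR n * phi c)%R by [].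
lra.
Qed.

Lemma drift_sum (c : config n p) : Inv c -> ~~ is_fixed e c ->
  (\big[Rplus/0%R]_(u : 'I_n) Phi (update e c u) <= INR n * Phi c - INR n)%R.
Proof.
move=> I Hf; have [G [HG H1 H2]] := drift_main I Hf.
have := avg_drop (f := fun u => Phi (update e c u)) (K := Phi c) HG H1.
rewrite card_ord; apply; exact: H2.
Qed.

Lemma Phi_bound (c : config n p) : (0 < p)%N ->
  (Phi c <= Bc + Ec * INR p)%R.
Proof.
move=> p0.
have hn := nR.
have hEc : (0 <= Ec)%R by rewrite /Ec; repeat apply: Rmult_le_pos; try lra; apply: Hn_ge0.
have hpm : (INR p.-1 + 1 = INR p)%R by rewrite -S_INR prednK.
have hB : (Bc <= Bc + Ec * INR p)%R.
  have : (0 <= Ec * INR p)%R by apply: Rmult_le_pos => //; apply: pos_INR.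
  lra.
rewrite /Phi; case: ifP => Hph3.
  apply: Rle_trans hB; rewrite /Bc.
  have h1 : (INR n * INR #|dirty c| <= INR n * INR n)%R.
    by apply: Rmult_le_compat_l; [lra | apply: INR_le; apply: dirty_le].
  have : (0 <= INR n * (INR n * INR p.+1))%R by repeat apply: Rmult_le_pos; try lra; apply: pos_INR.
  lra.
case: ifP => HS.
  apply: Rle_trans hB; have := Phi_S2_B HS; rewrite /Phi Hph3 HS; done.
have hW : (INR (#|cur c|).-1 <= INR p.-1)%R.
  by apply: INR_le; rewrite -!subn1 leq_sub2r // card_le_p.
have h1 : (Ec * INR (#|cur c|).-1 <= Ec * INR p.-1)%R by apply: Rmult_le_compat_l.
have h2 : (INR n * phi c <= Ec)%R by rewrite /Ec; apply: Rmult_le_compat_l; [lra | apply: phi_le].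
have h3 : (Ec * INR p = Ec * INR p.-1 + Ec)%R by rewrite -hpm; ring.
lra.
Qed.

End Model.

Lemma final_arith (N P L H : R) : (0 < N)%R -> (1 <= P)%R -> (/ 2 < L)%R -> (H <= 1 + L)%R ->
  (N * N + N * (N * (P + 1)) + N * (N * H) * P <= 9 * N ^ 2 * P * L)%R.
Proof.
move=> hN hP hL hH.
have hN2 : (0 < N * N)%R by apply: Rmult_lt_0_compat.
have e1 : (N * N + N * (N * (P + 1)) + N * (N * H) * P = (N * N) * (P + 2 + H * P))%R by ring.
have e2 : (9 * N ^ 2 * P * L = (N * N) * (9 * P * L))%R by ring.
rewrite e1 e2; apply: Rmult_le_compat_l; first lra.
have h1 : (H * P <= (1 + L) * P)%R by apply: Rmult_le_compat_r; lra.
have h2 : (4 * P <= 8 * P * L)%R.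
  have : (P * (/ 2) <= P * L)%R by apply: Rmult_le_compat_l; lra.
  lra.
have h3 : (0 <= P * L)%R by apply: Rmult_le_pos; lra.
nra.
Qed.

Open Scope R_scope.

Theorem theorem1 :
  exists C : R, forall (n p : nat) (e : rel 'I_n) (x0 : 'I_n -> 'I_p),
    (2 <= n)%nat ->
    simple_graph e -> connected_graph e ->
    forall N : nat,
      sum_f_R0 (fun t => INR (not_yet_fixed_count e (init_config x0) t) / (INR n ^ t)) N
      <= C * (INR n) ^ 2 * INR p * ln (INR n).
Proof.
exists 9; move=> n p e x0 n2 Hs Hc N.
have n0 : (0 < n)%nat by apply: ltnW.
have p0 : (0 < p)%nat by case: (x0 (Ordinal n0)) => m Hm; apply: leq_ltn_trans Hm.
have I0 : Inv (init_config x0).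
  by move=> v; rewrite /xs /Ms /init_config ffunE /= set11.
have H := @drift_bound n p e (@Inv n p) (Phi e n2) n0
  (fun c u Ic => Inv_step n2 Hc u Ic) (fun c _ => Phi_ge0 e n2 c)
  (fun c Ic Hf => drift_sum n2 Hs Hc Ic Hf) N (init_config x0) I0.
apply: Rle_trans H _.
apply: Rle_trans (Phi_bound e n2 (init_config x0) p0) _.
rewrite /Bc /Ec.
have hn : 0 < INR n by apply: lt_0_INR; apply/ltP.
have hP : 1 <= INR p by have := INR_le p0; rewrite /=.
have hL : / 2 < ln (INR n).
  apply: Rlt_le_trans ln_lt_2 _; apply: ln_le'; first lra.
  by have := INR_le n2.
have hH := Hn_ln n0.
rewrite S_INR.
exact: final_arith.
Qed.
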